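(* Let $T$ be a generalized tree-like graph with parameters $n_o\ge1$, $k_c$, $\hat k_b\ge1$ and $k=n_ok_c-(n_o-1)\hat k_b$ clients, and assume $k_c>\bar k_b$, where $\bar k_b=2\hat k_b$ if $n_o\ge3$, $\bar k_b=\hat k_b$ if $n_o=2$, $\bar k_b=0$ if $n_o=1$ (equivalently: every $o_i$ has a client neighbour adjacent to no other orchestrator vertex). Let $G_{er}$ be the enhanced ring graph on the $k$ clients obtained from $T$ by applying, for $i=1,\dots,n_o$, the rule $H\mapsto\tau_{o_i}(H)-o_i$. Let $T'$ be a generalized tree-like graph with parameters $n_o$, $k_c'=k_c-1$, $\hat k_b$ (hence with $k'=k-n_o$ clients and $k'+n_o=k$ vertices in total). Then there is a bijection between the vertex sets of $T'$ and $G_{er}$ under which $G_{er}$ is obtained from $T'$ by a sequence of local complementations (namely at the orchestrator vertices $o'_1,\dots,o'_{n_o}$ of $T'$). Consequently the graph state $\ket{G_{er}}$ is local-Clifford equivalent (up to relabelling of qubits) to the $k$-qubit generalized tree-like graph state $\ket{T'}$.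
   Context: All graphs are finite, simple and undirected. For $H=(V,E)$ and $a\in V$, $N_a=\{b:\{a,b\}\in E\}$; the local complementation $\tau_a(H)$ toggles the edge $\{b,c\}$ for every pair of distinct $b,c\in N_a$; $H-a$ deletes $a$ and its incident edges. Graph state $\ket{H}=\prod_{\{a,b\}\in E}\mathrm{CZ}_{ab}\ket{+}^{\otimes|V|}$. Two graph states are local-Clifford (LC) equivalent iff their graphs are related by a sequence of local complementations. Generalized tree-like graph with parameters $n_o\ge1$, $k_c$, $\hat k_b\ge1$: vertex set $\{o_1,\dots,o_{n_o}\}\cup V_c$ (disjoint) such that (i) every edge joins some $o_i$ to a client in $V_c$; (ii) $|N_{o_i}|=k_c$ for all $i$; (iii) $|N_{o_i}\cap N_{o_{i+1}}|=\hat k_b$ for $1\le i<n_o$; (iv) $N_{o_i}\cap N_{o_j}=\emptyset$ for $|i-j|\ge2$; (v) every client is adjacent to some $o_i$. Then $|V_c|=n_ok_c-(n_o-1)\hat k_b$. *)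

(* Defs.v *)
From mathcomp Require Import all_boot.
Set Implicit Arguments. Unset Strict Implicit. Unset Printing Implicit Defensive.

Record graph (U : finType) := Graph { gV : {set U}; gE : {set {set U}} }.

Section Graphs.
Variable U : finType.

Definition simple_graph (G : graph U) : Prop :=
  forall e, e \in gE G -> #|e| = 2 /\ e \subset gV G.

Definition nbh (G : graph U) (a : U) : {set U} := [set b | [set a; b] \in gE G].

Definition lc (G : graph U) (a : U) : graph U :=
  let T := [set [set b; c] | b in nbh G a, c in nbh G a & b != c] in
  Graph (gV G) ((gE G :\: T) :|: (T :\: gE G)).

Definition del (G : graph U) (a : U) : graph U :=
  Graph (gV G :\ a) [set e in gE G | a \notin e].

Definition lcs (G : graph U) (s : seq U) : graph U := foldl lc G s.

(* Generalized tree-like graph with parameters n_o, k_c, hat k_b;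
   orchestrators o 0, ..., o (n_o - 1) (0-based indexing), client set Vc. *)
Definition gen_tree_like (G : graph U) (no kc kb : nat) (o : nat -> U)
    (Vc : {set U}) : Prop :=
  [/\ simple_graph G, 1 <= no & 1 <= kb] /\
  {in [pred i | i < no] &, injective o} /\
  (gV G = [set o (val i) | i in 'I_no] :|: Vc /\ (forall i, i < no -> o i \notin Vc)) /\
  (forall e, e \in gE G ->
               exists2 i, i < no & exists2 c, c \in Vc & e = [set o i; c]) /\
  (forall i, i < no -> #|nbh G (o i)| = kc) /\
  (forall i, i.+1 < no -> #|nbh G (o i) :&: nbh G (o i.+1)| = kb) /\
  (forall i j, j < no -> i.+2 <= j -> nbh G (o i) :&: nbh G (o j) = set0) /\
  (forall c, c \in Vc -> exists2 i, i < no & c \in nbh G (o i)).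

Definition enhanced_ring (G : graph U) (no : nat) (o : nat -> U) : graph U :=
  foldl (fun H i => del (lc H (o i)) (o i)) G (iota 0 no).

End Graphs.

Definition relabel (U' U : finType) (f : U' -> U) (G : graph U') : graph U :=
  Graph (f @: gV G) [set f @: (e : {set U'}) | e in gE G].

Definition kbar (no kb : nat) : nat :=
  if 3 <= no then 2 * kb else if no == 2 then kb else 0.

(* Main.v *)
Require Import Defs.
From mathcomp Require Import all_boot zify.
Set Implicit Arguments. Unset Strict Implicit. Unset Printing Implicit Defensive.

Section Generic.
Variable U : finType.
Implicit Types (G H : graph U) (S M : {set U}) (e : {set U}).

Definition clq S : {set {set U}} := [set e : {set U} | (#|e| == 2) && (e \subset S)].

Lemma clqE S : [set [set b; c] | b in S, c in S & b != c] = clq S.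
Proof.
apply/setP => e; rewrite inE; apply/imset2P/andP.
- case=> b c bS; rewrite inE => /andP[cS bc] ->; split; first by rewrite cards2 bc.
  by apply/subsetP => x; rewrite !inE => /orP[] /eqP ->.
- case=> /cards2P [b [c [bc ->]]] sub; exists b c.
  + by apply: (subsetP sub); rewrite !inE eqxx.
  + by rewrite inE bc andbT; apply: (subsetP sub); rewrite !inE eqxx orbT.
  + by [].
Qed.

Lemma in_lcE G a e : (e \in gE (lc G a)) = (e \in gE G) (+) (e \in clq (nbh G a)).
Proof.
rewrite /lc /= clqE !inE.
by case: (e \in gE G); case: (#|e| == 2); case: (e \subset _).
Qed.

Lemma in_delE G a e : (e \in gE (del G a)) = (a \notin e) && (e \in gE G).
Proof. by rewrite /del /= inE andbC. Qed.

Lemma clq_mem S e x : e \in clq S -> x \in e -> x \in S.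
Proof. by rewrite inE => /andP[_ /subsetP]; apply. Qed.

Lemma set2_mem (x y : U) : x \in [set x; y].
Proof. by rewrite !inE eqxx. Qed.
Lemma set2_mem2 (x y : U) : y \in [set x; y].
Proof. by rewrite !inE eqxx orbT. Qed.

Lemma set2_inv (a b x y : U) : [set a; b] = [set x; y] -> (a = x /\ b = y) \/ (a = y /\ b = x).
Proof.
move=> E.
have ha : a \in [set x; y] by rewrite -E set2_mem.
have hb : b \in [set x; y] by rewrite -E set2_mem2.
have hx : x \in [set a; b] by rewrite E set2_mem.
have hy : y \in [set a; b] by rewrite E set2_mem2.
case/set2P: ha => ea; case/set2P: hb => eb; subst a b; auto.
- by case/set2P: hy => ->; auto.
- by case/set2P: hx => ->; auto.
Qed.

Definition delc H a := del (lc H a) a.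

Lemma delc_fold G (N : U -> {set U}) (s : seq U) :
  uniq s -> (forall a b, a \in s -> b \in s -> b \notin N a) ->
  (forall a, a \in s -> nbh G a = N a) ->
  (forall x, (x \in gV (foldl delc G s)) = (x \in gV G) && (x \notin s)) /\
  (forall e, (e \in gE (foldl delc G s)) =
     ((e \in gE G) && all (fun a => a \notin e) s) (+) odd (count (fun a => e \in clq (N a)) s)).
Proof.
elim/last_ind: s => [|s x IH] /=.
  by move=> _ _ _; split=> [x|e]; rewrite ?andbT ?addbF.
rewrite rcons_uniq => /andP[xs us] Hn Hb.
have sub : forall y, y \in s -> y \in rcons s x by move=> y ys; rewrite mem_rcons inE ys orbT.
have xr : x \in rcons s x by rewrite mem_rcons inE eqxx.
have [IHv IHe] := IH us (fun a b ha hb => Hn a b (sub a ha) (sub b hb)) (fun a ha => Hb a (sub a ha)).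
rewrite foldl_rcons; set H := foldl delc G s.
have nbhx : nbh H x = N x.
  apply/setP => b; rewrite [in LHS]inE IHe.
  have -> : count (fun a => [set x; b] \in clq (N a)) s = 0.
    apply/eqP; rewrite -leqn0 leqNgt -has_count; apply/hasPn => a ha.
    apply/negP => /clq_mem /(_ (set2_mem x b)); by rewrite (negPf (Hn a x (sub a ha) xr)).
  rewrite addbF -Hb // [in RHS]inE.
  case bE: ([set x; b] \in gE G) => //=.
  apply/allP => a ha; rewrite !inE; apply/negP => /orP[/eqP ax|/eqP ab].
    by move: xs; rewrite -ax ha.
  have : b \in N x by rewrite -Hb // inE.
  by rewrite -ab (negPf (Hn x a xr (sub a ha))).
split.
  move=> y; rewrite /delc /del /= inE IHv mem_rcons inE.
  by rewrite in_cons; case: (y == x) => /=; rewrite ?andbF.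
move=> e; rewrite /delc in_delE in_lcE nbhx IHe all_rcons -cats1 count_cat /= addn0 oddD.
case xe: (x \in e) => /=.
  have c0 : forall a, a \in rcons s x -> e \notin clq (N a).
    move=> a ha; apply/negP => /clq_mem /(_ xe); by rewrite (negPf (Hn a x ha xr)).
  have -> : count (fun a => e \in clq (N a)) s = 0.
    apply/eqP; rewrite -leqn0 leqNgt -has_count; apply/hasPn => a ha.
    by apply: c0; apply: sub.
  by rewrite andbF (negPf (c0 x xr)).
by rewrite oddb addbA.
Qed.

Lemma lc_fold G (N : U -> {set U}) (s : seq U) :
  (forall a b, a \in s -> b \in s -> b \notin N a) ->
  (forall a, a \in s -> nbh G a = N a) ->
  gV (lcs G s) = gV G /\
  (forall e, (e \in gE (lcs G s)) = (e \in gE G) (+) odd (count (fun a => e \in clq (N a)) s)).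
Proof.
rewrite /lcs.
elim/last_ind: s => [|s x IH] /=.
  by move=> _ _; split=> // e; rewrite addbF.
move=> Hn Hb.
have sub : forall y, y \in s -> y \in rcons s x by move=> y ys; rewrite mem_rcons inE ys orbT.
have xr : x \in rcons s x by rewrite mem_rcons inE eqxx.
have [IHv IHe] := IH (fun a b ha hb => Hn a b (sub a ha) (sub b hb)) (fun a ha => Hb a (sub a ha)).
rewrite foldl_rcons; set H := foldl (@lc U) G s.
have nbhx : nbh H x = N x.
  apply/setP => b; rewrite [in LHS]inE IHe.
  have -> : count (fun a => [set x; b] \in clq (N a)) s = 0.
    apply/eqP; rewrite -leqn0 leqNgt -has_count; apply/hasPn => a ha.
    apply/negP => /clq_mem /(_ (set2_mem x b)); by rewrite (negPf (Hn a x (sub a ha) xr)).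
  by rewrite addbF -Hb // [in RHS]inE.
split; first by rewrite /lc /= IHv.
move=> e; rewrite in_lcE nbhx IHe -cats1 count_cat /= addn0 oddD.
by rewrite oddb addbA.
Qed.

Definition star (c : U) M : {set {set U}} := [set [set c; x] | x in M].

Lemma clqU1 (c : U) M e : c \notin M ->
  (e \in clq (c |: M)) = (e \in clq M) || (e \in star c M) /\
  ~~ ((e \in clq M) && (e \in star c M)).
Proof.
move=> cM.
have stE : e \in star c M -> c \in e /\ e \in clq (c |: M).
  case/imsetP=> x xM ->; split; first exact: set2_mem.
  have cx : c != x by apply/eqP => cx; move: cM; rewrite cx xM.
  rewrite inE cards2 cx /=; apply/subsetP => y; rewrite !inE => /orP[] /eqP ->; by rewrite ?eqxx ?xM ?orbT.
split; last first.
  apply/negP => /andP[h1 /stE [ce _]]; by move: (clq_mem h1 ce); rewrite (negPf cM).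
apply/idP/orP.
  move=> h; case ce: (c \in e).
    right; move: h; rewrite inE => /andP[/cards2P [b1 [b2 [b12 eE]]] sub].
    move: ce; rewrite eE !inE => /orP[] /eqP cb.
      apply/imsetP; exists b2; last by rewrite cb.
      have : b2 \in c |: M by apply: (subsetP sub); rewrite eE set2_mem2.
      by rewrite !inE cb eq_sym (negPf b12).
    apply/imsetP; exists b1; last by rewrite cb setUC.
    have : b1 \in c |: M by apply: (subsetP sub); rewrite eE set2_mem.
    by rewrite !inE cb (negPf b12).
  left; move: h; rewrite !inE => /andP[-> /subsetP sub] /=; apply/subsetP => y ye.
  by move: (sub y ye); rewrite !inE => /orP[/eqP yc|//]; move: ce; rewrite -yc ye.
case=> [|/stE[] //]; rewrite !inE => /andP[-> sub] /=; apply: (subset_trans sub); exact: subsetU1.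
Qed.

End Generic.

Section TL.
Variables (U : finType) (G : graph U) (no kc kb : nat) (o : nat -> U) (Vc : {set U}).
Hypothesis HG : gen_tree_like G no kc kb o Vc.

Local Notation N i := (nbh G (o i)).

Lemma tl_inj i j : i < no -> j < no -> o i = o j -> i = j.
Proof. by case: HG => _ [inj _] hi hj; apply: inj. Qed.

Lemma tl_oVc i : i < no -> o i \notin Vc.
Proof. by case: HG => _ [_ [[_ h] _]]; exact: h. Qed.

Lemma tl_gV x : (x \in gV G) = [exists i : 'I_no, x == o i] || (x \in Vc).
Proof.
case: HG => _ [_ [[-> _] _]]; rewrite !inE; congr (_ || _).
apply/imsetP/existsP => [[i _ ->]|[i /eqP ->]]; by exists i.
Qed.

Lemma tl_edge e : e \in gE G -> exists2 i, i < no & exists2 c, c \in Vc & e = [set o i; c].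
Proof. by case: HG => _ [_ [_ [h _]]]; exact: h. Qed.

Lemma tl_edge_cl i b : i < no -> [set o i; b] \in gE G -> b \in Vc.
Proof.
move=> hi /tl_edge [j hj [c hc /set2_inv [[_ ->]|[oc _]]]] //.
by move: (tl_oVc hi); rewrite oc hc.
Qed.

Lemma tl_nbh_sub i : i < no -> N i \subset Vc.
Proof. by move=> hi; apply/subsetP => b; rewrite inE; apply: tl_edge_cl. Qed.

Lemma tl_edge_o e : e \in gE G -> exists2 i, i < no & o i \in e.
Proof. by case/tl_edge => i hi [c _ ->]; exists i => //; apply: set2_mem. Qed.

Lemma tl_cover x : x \in Vc -> exists2 i, i < no & x \in N i.
Proof. by case: HG => _ [_ [_ [_ [_ [_ [_ h]]]]]]; exact: h. Qed.

Lemma tl_card i : i < no -> #|N i| = kc.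
Proof. by case: HG => _ [_ [_ [_ [h _]]]]; exact: h. Qed.

Lemma tl_inter i : i.+1 < no -> #|N i :&: N i.+1| = kb.
Proof. by case: HG => _ [_ [_ [_ [_ [h _]]]]]; exact: h. Qed.

Lemma tl_disj i j : j < no -> i.+2 <= j -> N i :&: N j = set0.
Proof. by case: HG => _ [_ [_ [_ [_ [_ [h _]]]]]]; exact: h. Qed.

Definition key x := [seq i <- iota 0 no | x \in N i].

Lemma mem_key x i : (i \in key x) = (i < no) && (x \in N i).
Proof. by rewrite mem_filter mem_iota add0n andbC. Qed.

Lemma key_cases x : x \in Vc ->
  (exists2 i, i < no & key x = [:: i]) \/ (exists2 i, i.+1 < no & key x = [:: i; i.+1]).
Proof.
move=> xV.
have srt : sorted ltn (key x) := sorted_filter ltn_trans _ (iota_ltn_sorted 0 no).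
have [i0 hi0 xi0] := tl_cover xV.
have : i0 \in key x by rewrite mem_key hi0 xi0.
have mk := mem_key x.
case: (key x) srt mk => [|i t] //= srt mk _.
have := mk i; rewrite inE eqxx /= => /esym /andP[hi xi].
have ht : forall j, j \in t -> j = i.+1.
  move=> j jt.
  have := mk j; rewrite inE jt orbT => /esym /andP[hj xj].
  have ij : i < j by move: (order_path_min ltn_trans srt) => /allP; apply.
  case: (ltnP j i.+2) => hj2; first by apply/eqP; rewrite eqn_leq ij -ltnS hj2.
  have : x \in N i :&: N j by rewrite inE xi xj.
  by rewrite tl_disj // inE.
case: t srt mk ht => [|j t] srt mk ht; first by left; exists i.
right; exists i; last first.
  have -> : j = i.+1 by apply: ht; rewrite inE eqxx.
  case: t srt mk ht => [|j' t] // srt mk ht.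
  have e1 : j = i.+1 by apply: ht; rewrite inE eqxx.
  have e2 : j' = i.+1 by apply: ht; rewrite !inE eqxx orbT.
  by move: srt => /= /and3P[_]; rewrite e1 e2 ltnn.
have := mk j; rewrite !inE eqxx orbT => /esym /andP[hj _].
by rewrite -(ht j) // inE eqxx.
Qed.

Definition fiber s := [set x in Vc | key x == s].

Lemma fiber_good s x : x \in fiber s ->
  (exists2 i, i < no & s = [:: i]) \/ (exists2 i, i.+1 < no & s = [:: i; i.+1]).
Proof.
rewrite inE => /andP[xV /eqP <-].
by case: (key_cases xV) => [[i hi ->]|[i hi ->]]; [left|right]; exists i.
Qed.

Lemma in_fiber_N s x i : x \in fiber s -> i < no -> (x \in N i) = (i \in s).
Proof. by rewrite inE => /andP[_ /eqP <-] hi; rewrite mem_key hi. Qed.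

Lemma fiber2 i : i.+1 < no -> fiber [:: i; i.+1] = N i :&: N i.+1.
Proof.
move=> hi; have hi' : i < no by apply: ltnW.
apply/setP => x; apply/idP/idP.
  move=> xf; rewrite in_setI (in_fiber_N xf hi') (in_fiber_N xf hi); by rewrite !inE !eqxx ?orbT.
rewrite inE => /andP[x1 x2].
have xV : x \in Vc by apply: (subsetP (tl_nbh_sub hi')).
have k1 : i \in key x by rewrite mem_key hi' x1.
have k2 : i.+1 \in key x by rewrite mem_key hi x2.
rewrite inE xV /=.
case: (key_cases xV) k1 k2 => [[j _ ->]|[j _ ->]]; rewrite !inE.
  by move=> /eqP e1 /eqP e2; exfalso; lia.
move=> /orP[/eqP e1|/eqP e1] /orP[/eqP e2|/eqP e2]; try (exfalso; lia).
by rewrite e1.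
Qed.

Lemma fiber_card2 i : #|fiber [:: i; i.+1]| = (if i.+1 < no then kb else 0).
Proof.
case: ifP => hi; first by rewrite fiber2 // tl_inter.
apply/eqP; rewrite cards_eq0; apply/eqP/setP => x; rewrite in_set0.
apply/negP => xf; case: (fiber_good xf) => [[j _ //]|[j hj [e1]]].
by move: hi; rewrite e1 hj.
Qed.

Lemma fiber00 : fiber [:: 0; 0] = set0.
Proof.
apply/setP => x; rewrite in_set0; apply/negP => xf.
by case: (fiber_good xf) => [[j _ //]|[j _ [e1 e2]]]; lia.
Qed.

Lemma fiber_disj s t x : x \in fiber s -> x \in fiber t -> s = t.
Proof. by rewrite !inE => /andP[_ /eqP <-] /andP[_ /eqP <-]. Qed.

Lemma fiber_sub s : fiber s \subset Vc.
Proof. by apply/subsetP => x; rewrite inE => /andP[]. Qed.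

Lemma Ni_split i : i < no -> N i = fiber [:: i] :|: fiber [:: i.-1; i] :|: fiber [:: i; i.+1].
Proof.
move=> hi; apply/setP => x; apply/idP/idP.
  move=> xN.
  have xV : x \in Vc by apply: (subsetP (tl_nbh_sub hi)).
  have k : i \in key x by rewrite mem_key hi xN.
  rewrite !inE xV /=.
  case: (key_cases xV) k => [[j _ ->]|[j _ ->]]; rewrite !inE.
    by move=> /eqP ->; rewrite eqxx.
  by move=> /orP[/eqP ->|/eqP ->]; rewrite eqxx ?orbT.
by rewrite !in_setU => /orP[/orP[]|] xf; rewrite (in_fiber_N xf hi) !inE !eqxx ?orbT.
Qed.

Lemma fiber_card1 i : i < no ->
  #|fiber [:: i]| + (if 0 < i then kb else 0) + (if i.+1 < no then kb else 0) = kc.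
Proof.
move=> hi.
have d : forall s t, s != t -> fiber s :&: fiber t = set0.
  move=> s t st; apply/setP => x; rewrite in_set0 in_setI; apply/negP => /andP[x1 x2].
  by move: st; rewrite (fiber_disj x1 x2) eqxx.
have cardU : forall A B : {set U}, A :&: B = set0 -> #|A :|: B| = #|A| + #|B|.
  by move=> A B AB; rewrite -cardsUI AB cards0 addn0.
rewrite -(tl_card hi) (Ni_split hi) cardU; last first.
  by rewrite setIUl !d ?setU0 //; apply/eqP => -[] *; solve [lia | discriminate].
rewrite cardU; last by rewrite d //; apply/eqP.
rewrite fiber_card2; congr (_ + _ + _).
case: i hi => [|i] hi /=; first by rewrite fiber00 cards0.
by rewrite fiber_card2 hi.
Qed.

End TL.

Section Main.
Variables (U U' : finType) (T : graph U) (no kc kb : nat) (o : nat -> U)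
    (Vc : {set U}) (T' : graph U') (o' : nat -> U') (Vc' : {set U'}).
Hypotheses (HT : gen_tree_like T no kc kb o Vc) (Hk : kbar no kb < kc)
  (HT' : gen_tree_like T' no (kc - 1) kb o' Vc').

Local Notation N i := (nbh T (o i)).
Local Notation N' i := (nbh T' (o' i)).
Local Notation keyT := (key T no o).
Local Notation key' := (key T' no o').
Local Notation fib := (fiber T no o Vc).
Local Notation fib' := (fiber T' no o' Vc').

Lemma fib1_pos i : i < no -> 0 < #|fib [:: i]|.
Proof.
move=> hi; have := fiber_card1 HT hi; move: Hk; rewrite /kbar.
case h1: (0 < i); case h2: (i.+1 < no); case h3: (3 <= no); case h4: (no == 2);
  move: h4 => /eqP h4 //=; lia.
Qed.

Definition c i := odflt (o 0) [pick x in fib [:: i]].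

Lemma c_in i : i < no -> c i \in fib [:: i].
Proof.
move=> hi; rewrite /c; case: pickP => [x //|none].
by move: (fib1_pos hi); rewrite cardE; case: (enum _) (mem_enum (fib [:: i])) => [//|y s] /(_ y); rewrite none inE eqxx.
Qed.

Lemma c_key i : i < no -> keyT (c i) = [:: i] /\ c i \in Vc.
Proof. by move/c_in; rewrite inE => /andP[-> /eqP ->]. Qed.

Lemma c_inj i j : i < no -> j < no -> c i = c j -> i = j.
Proof. by move=> hi hj e; have [k1 _] := c_key hi; have [k2 _] := c_key hj; move: k1; rewrite e k2 => -[]. Qed.

Lemma c_N i j : i < no -> j < no -> (c i \in N j) = (i == j).
Proof. by move=> hi hj; rewrite (in_fiber_N (c_in hi) hj) inE eq_sym. Qed.

Definition tgt s := fib s :\ c (head 0 s).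

Lemma card_eq s : #|fib' s| = #|tgt s|.
Proof.
have [[i hi ->]|[[i hi ->]|[E' E]]] : (exists2 i, i < no & s = [:: i]) \/
   (exists2 i, i.+1 < no & s = [:: i; i.+1]) \/ (fib' s = set0 /\ fib s = set0).
  case: (set_0Vmem (fib' s)) => [E'|[x xf]]; last first.
    by case: (fiber_good HT' xf) => [h|h]; [left|right; left].
  case: (set_0Vmem (fib s)) => [E|[x xf]]; last first.
    by case: (fiber_good HT xf) => [h|h]; [left|right; left].
  by right; right.
- have h1 := fiber_card1 HT hi; have h2 := fiber_card1 HT' hi.
  have h3 := cardsD1 (c i) (fib [:: i]); rewrite c_in // in h3.
  rewrite /tgt /=; lia.
- rewrite /tgt /= (fiber_card2 HT' i) -(fiber_card2 HT i) (cardsD1 (c i) (fib [:: i; i.+1])).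
  suff -> : c i \in fib [:: i; i.+1] = false by [].
  by apply/negP => h; have := fiber_disj (c_in (ltnW hi)) h.
- rewrite E' cards0; apply/esym/eqP; rewrite cards_eq0; apply/eqP/setP => x.
  by rewrite !in_set0 in_setD1 E in_set0 andbF.
Qed.

Definition f (x' : U') : U :=
  if [pick i : 'I_no | o' i == x'] is Some i then c i
  else nth (o 0) (enum (tgt (key' x'))) (index x' (enum (fib' (key' x')))).

Lemma f_o i : i < no -> f (o' i) = c i.
Proof.
move=> hi; rewrite /f; case: pickP => [j /eqP /(tl_inj HT' (ltn_ord j) hi) -> //|].
by move/(_ (Ordinal hi)); rewrite eqxx.
Qed.

Lemma f_tgt x : x \in Vc' -> f x \in tgt (key' x).
Proof.
move=> xV; rewrite /f; case: pickP => [j /eqP ej|_].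
  by move: (tl_oVc HT' (ltn_ord j)); rewrite ej xV.
have xf : x \in fib' (key' x) by rewrite inE xV eqxx.
rewrite -mem_enum; apply: mem_nth; rewrite -cardE -card_eq cardE index_mem mem_enum //.
Qed.

Lemma f_key x : x \in Vc' -> [/\ keyT (f x) = key' x, f x \in Vc & f x != c (head 0 (key' x))].
Proof. by move/f_tgt; rewrite !inE => /and3P[-> -> /eqP ->]. Qed.

Lemma f_ne_c x j : x \in Vc' -> j < no -> f x != c j.
Proof.
move=> xV hj; apply/eqP => e; have [k _ ne] := f_key xV.
have [kcj _] := c_key hj; move: ne k; rewrite e kcj => /negP ne k.
by apply: ne; rewrite -k.
Qed.

Lemma f_inj : {in gV T' &, injective f}.
Proof.
have cl_inj : {in Vc' &, injective f}.
  move=> x y xV yV e.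
  have [kx _ _] := f_key xV; have [ky _ _] := f_key yV.
  have ek : key' x = key' y by rewrite -kx -ky e.
  have xf : x \in fib' (key' x) by rewrite inE xV eqxx.
  have yf : y \in fib' (key' x) by rewrite inE yV ek eqxx.
  move: e; rewrite /f; case: pickP => [j /eqP ej|_].
    by move: (tl_oVc HT' (ltn_ord j)); rewrite ej xV.
  case: pickP => [j /eqP ej|_].
    by move: (tl_oVc HT' (ltn_ord j)); rewrite ej yV.
  rewrite -ek => e.
  have lt : forall z, z \in fib' (key' x) -> index z (enum (fib' (key' x))) < size (enum (tgt (key' x))).
    by move=> z zf; rewrite -cardE -card_eq cardE index_mem mem_enum.
  have := congr1 (index^~ (enum (tgt (key' x)))) e.
  rewrite !index_uniq ?enum_uniq ?lt // => ei.
  by have := congr1 (nth (o' 0) (enum (fib' (key' x)))) ei; rewrite !nth_index ?mem_enum.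
move=> x y; rewrite !(tl_gV HT') => /orP[/existsP[i /eqP ->]|xV] /orP[/existsP[j /eqP ->]|yV].
- by rewrite !f_o // => /(c_inj (ltn_ord i) (ltn_ord j)) ->.
- by rewrite f_o // => /esym/eqP; rewrite (negPf (f_ne_c yV (ltn_ord i))).
- by rewrite f_o // => /eqP; rewrite (negPf (f_ne_c xV (ltn_ord j))).
- exact: cl_inj.
Qed.

Lemma f_N x i : x \in Vc' -> i < no -> (f x \in N i) = (x \in N' i).
Proof.
move=> xV hi; have [k _ _] := f_key xV.
by rewrite -[LHS]andTb -hi -mem_key k mem_key hi.
Qed.

Lemma f_im : f @: gV T' = Vc.
Proof.
apply/setP => x; apply/imsetP/idP.
  case=> y; rewrite (tl_gV HT') => /orP[/existsP[i /eqP ->]|yV] ->.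
    by rewrite f_o //; case: (c_key (ltn_ord i)).
  by case: (f_key yV).
move=> xV.
have xf : x \in fib (keyT x) by rewrite inE xV eqxx.
have [i hi hh] : exists2 i, i < no & head 0 (keyT x) = i.
  by case: (key_cases HT xV) => [[i hi ->]|[i hi ->]]; exists i => //; apply: ltnW.
case ec: (x == c i).
  exists (o' i); last by rewrite f_o // (eqP ec).
  by rewrite (tl_gV HT'); apply/orP; left; apply/existsP; exists (Ordinal hi).
have xt : x \in tgt (keyT x) by rewrite /tgt in_setD1 hh ec xf.
set k := index x (enum (tgt (keyT x))).
have hk : k < #|fib' (keyT x)| by rewrite card_eq cardE index_mem mem_enum.
set y := nth (o' 0) (enum (fib' (keyT x))) k.
have yf : y \in fib' (keyT x) by rewrite -mem_enum mem_nth // -cardE.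
move: (yf); rewrite inE => /andP[yV /eqP ky].
exists y; first by rewrite (tl_gV HT') yV orbT.
rewrite /f; case: pickP => [j /eqP ej|_].
  by move: (tl_oVc HT' (ltn_ord j)); rewrite ej yV.
by rewrite ky index_uniq ?enum_uniq -?cardE // nth_index ?mem_enum.
Qed.


Local Notation M j := (f @: N' j).

Lemma cNotM i j : i < no -> j < no -> c i \notin M j.
Proof.
move=> hi hj; apply/imsetP => -[y yN e].
have yV : y \in Vc' by apply: (subsetP (tl_nbh_sub HT' hj)).
by move: (f_ne_c yV hi); rewrite e eqxx.
Qed.

Lemma NT_eq i : i < no -> N i = c i |: M i.
Proof.
move=> hi; apply/setP => x; rewrite in_setU1; apply/idP/idP.
  move=> xN; have xV : x \in Vc by apply: (subsetP (tl_nbh_sub HT hi)).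
  move: xV; rewrite -f_im => /imsetP[y]; rewrite (tl_gV HT') => /orP[/existsP[j /eqP ->]|yV] ex.
    move: xN; rewrite ex f_o // c_N // => /eqP ->; by rewrite eqxx.
  by rewrite ex imset_f ?orbT // -f_N // -ex.
case/orP => [/eqP ->|/imsetP[y yN ->]]; first by rewrite c_N.
have yV : y \in Vc' by apply: (subsetP (tl_nbh_sub HT' hi)).
by rewrite f_N.
Qed.

Lemma set2_im (a b : U') : f @: [set a; b] = [set f a; f b].
Proof. by rewrite imsetU1 imset_set1. Qed.

Lemma rel_nbh i : i < no -> nbh (relabel f T') (c i) = M i.
Proof.
move=> hi; apply/setP => b; rewrite [in LHS]inE /relabel /=; apply/imsetP/imsetP.
  case=> e eT E; case: (tl_edge HT' eT) => j hj [y yV ey].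
  move: E; rewrite ey set2_im f_o // => /set2_inv [[/(c_inj hi hj) eij ->]|[ey' _]].
    by exists y => //; rewrite eij inE -ey.
  by move: (f_ne_c yV hi); rewrite ey' eqxx.
case=> y yN ->; exists [set o' i; y]; first by move: yN; rewrite inE.
by rewrite set2_im f_o.
Qed.

Lemma E1_mem e : (e \in [set f @: (x : {set U'}) | x in gE T']) = [exists j : 'I_no, e \in star (c j) (M j)].
Proof.
apply/imsetP/existsP.
  case=> x xT ->; case: (tl_edge HT' xT) => j hj [y yV ex].
  exists (Ordinal hj); rewrite ex set2_im f_o //; apply/imsetP; exists (f y) => //.
  by apply: imset_f; rewrite inE -ex.
case=> j /imsetP[x /imsetP[y yN ->] ->]; exists [set o' j; y].
  by move: yN; rewrite inE.
by rewrite set2_im f_o.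
Qed.

Lemma star_uniq e i j : i < no -> j < no -> e \in star (c i) (M i) -> e \in star (c j) (M j) -> i = j.
Proof.
move=> hi hj /imsetP[x xM ->] /imsetP[y yM /set2_inv [[/(c_inj hi hj) //]|[ey _]]].
by move: (cNotM hi hj); rewrite ey yM.
Qed.

Lemma parity e : odd (count (fun j => e \in clq (N j)) (iota 0 no)) =
  (e \in [set f @: (x : {set U'}) | x in gE T']) (+) odd (count (fun j => e \in clq (M j)) (iota 0 no)).
Proof.
have hmem : forall j, j \in iota 0 no -> j < no by move=> j; rewrite mem_iota.
rewrite (eq_in_count (a2 := predU (fun j => e \in clq (M j)) (fun j => e \in star (c j) (M j)))); last first.
  by move=> j /hmem hj; rewrite NT_eq //= (clqU1 e (cNotM hj hj)).1.
have := count_predUI (fun j => e \in clq (M j)) (fun j => e \in star (c j) (M j)) (iota 0 no).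
rewrite (eq_in_count (a1 := predI _ _) (a2 := pred0)); last first.
  by move=> j /hmem hj /=; apply/negbTE; exact: (clqU1 e (cNotM hj hj)).2.
rewrite count_pred0 addn0 => ->; rewrite oddD addbC; congr (_ (+) _).
rewrite E1_mem; case: existsP => [[j ej]|ne].
  rewrite (eq_in_count (a2 := pred1 (val j))); last first.
    move=> k /hmem hk /=; apply/idP/eqP => [ek|->//].
    exact: (star_uniq hk (ltn_ord j) ek ej).
  by rewrite count_uniq_mem ?iota_uniq // mem_iota ltn_ord.
rewrite (eq_in_count (a2 := pred0)) ?count_pred0 // => k /hmem hk /=.
by apply/negP => ek; apply: ne; exists (Ordinal hk).
Qed.

Lemma foldl_map' (A B C : Type) (F : A -> B -> A) (g : C -> B) z s :
  foldl F z (map g s) = foldl (fun z x => F z (g x)) z s.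
Proof. by elim: s z => //= x s IH z; rewrite IH. Qed.

Lemma graph_eq (G1 G2 : graph U) : gV G1 = gV G2 -> gE G1 = gE G2 -> G1 = G2.
Proof. by case: G1; case: G2 => /= ? ? ? ? -> ->. Qed.

Lemma main_thm : exists f : U' -> U,
    [/\ {in gV T' &, injective f},
        f @: gV T' = gV (enhanced_ring T no o)
      & enhanced_ring T no o
        = lcs (relabel f T') [seq f (o' i) | i <- iota 0 no]].
Proof.
have ER : enhanced_ring T no o = foldl (@delc U) T (map o (iota 0 no)) by rewrite foldl_map'.
have hmem : forall j, j \in iota 0 no -> j < no by move=> j; rewrite mem_iota.
have u1 : uniq (map o (iota 0 no)).
  rewrite map_inj_in_uniq ?iota_uniq // => i j /hmem hi /hmem hj; move=> e; have := tl_inj HT hi hj e. done.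
have n1 : forall a b, a \in map o (iota 0 no) -> b \in map o (iota 0 no) -> b \notin nbh T a.
  move=> a b /mapP[i /hmem hi ->] /mapP[j /hmem hj ->]; apply/negP => h.
  by move: (tl_oVc HT hj); rewrite (subsetP (tl_nbh_sub HT hi) _ h).
have [LV LE] := delc_fold u1 n1 (fun _ _ => erefl).
have VER : gV (enhanced_ring T no o) = Vc.
  apply/setP => x; rewrite ER LV (tl_gV HT); case xV: (x \in Vc).
    rewrite orbT /=; apply/mapP => -[j /hmem hj ex].
    by move: (tl_oVc HT hj); rewrite -ex xV.
  rewrite orbF; case: existsP => [[i /eqP ex]|] //=.
  by rewrite ex map_f // mem_iota /=.
have n2 : forall a b, a \in [seq f (o' i) | i <- iota 0 no] -> b \in [seq f (o' i) | i <- iota 0 no] ->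
    b \notin nbh (relabel f T') a.
  move=> a b /mapP[i /hmem hi ->] /mapP[j /hmem hj ->].
  by rewrite !f_o // rel_nbh //; exact: cNotM.
have [RV RE] := lc_fold n2 (fun _ _ => erefl).
exists f; split; first exact: f_inj.
  by rewrite VER f_im.
apply: graph_eq; first by rewrite VER RV /= f_im.
apply/setP => e; rewrite ER LE RE.
have -> : (e \in gE T) && all (fun a => a \notin e) [seq o i | i <- iota 0 no] = false.
  case eT: (e \in gE T) => //=; have [i hi oi] := tl_edge_o HT eT.
  by apply/negP => /allP /(_ (o i)); rewrite map_f ?mem_iota // oi => /(_ isT).
rewrite /= !count_map parity; congr (_ (+) odd _).
by apply: eq_in_count => j /hmem hj /=; rewrite f_o // rel_nbh.
Qed.


End Main.

Theorem lemma6 (U U' : finType) (T : graph U) (no kc kb : nat) (o : nat -> U)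
    (Vc : {set U}) (T' : graph U') (o' : nat -> U') (Vc' : {set U'}) :
  gen_tree_like T no kc kb o Vc ->
  kbar no kb < kc ->
  gen_tree_like T' no (kc - 1) kb o' Vc' ->
  exists f : U' -> U,
    [/\ {in gV T' &, injective f},
        f @: gV T' = gV (enhanced_ring T no o)
      & enhanced_ring T no o
        = lcs (relabel f T') [seq f (o' i) | i <- iota 0 no]].
Proof. by move=> HT Hk HT'; exact: main_thm HT Hk HT'. Qed.
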